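(* Let $H$ be a balanced subgroup of $PL_o(I)$ whose only orbital is $A=(a,b)$, and let $\phi:H\to\mathbf{R}\times\mathbf{R}$ be $h\mapsto(\ln h'_+(a),\ln h'_-(b))$, where $h'_+(a)$ is the right derivative of $h$ at $a$ and $h'_-(b)$ the left derivative at $b$. Then $\phi$ is a homomorphism and its image $\phi(H)$ is either trivial or isomorphic to $\mathbf{Z}$.
   Context: $PL_o(I)$ is the group of orientation-preserving piecewise-linear homeomorphisms of $I=[0,1]$ with finitely many breaks in slope, acting on the right. The support of $h$ is the open set of points moved by $h$; an orbital of an element is a connected component of its support; an orbital of a subgroup $G$ is a connected component of the union of the supports of its elements. If $A$ is an orbital of a subgroup $G$ and $h\in G$, then $h$ realizes an end $e$ of $A$ if some orbital of $h$ is contained in $A$ and has $e$ as an endpoint. A group $H\le PL_o(I)$ is balanced if for every subgroup $G\le H$ and every orbital $A$ of $G$, every element of $G$ which realizes one end of $A$ also realizes the other end of $A$. *)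

(* Defs.v *)
From Stdlib Require Import Reals ClassicalEpsilon ZArith.
From Coquelicot Require Import Coquelicot.
Open Scope R_scope.

(* Elements of PL_o(I) are represented as functions R -> R that are the
   identity outside [0,1] (so that extensional equality is the right one). *)
Definition PLo (f : R -> R) : Prop :=
  (forall x, (x < 0 \/ 1 < x) -> f x = x) /\
  f 0 = 0 /\ f 1 = 1 /\
  (forall x y, 0 <= x -> x < y -> y <= 1 -> f x < f y) /\
  exists (n : nat) (xs : nat -> R),
    xs O = 0 /\ xs n = 1 /\
    forall i, (i < n)%nat ->
      xs i < xs (S i) /\
      exists m c, forall x, xs i <= x <= xs (S i) -> f x = m * x + c.

(* Right action: the product g*h means "first g, then h". *)
Definition gmul (g h : R -> R) : R -> R := fun x => h (g x).

Definition is_subgroup (G : (R -> R) -> Prop) : Prop :=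
  G (fun x => x) /\
  (forall g h, G g -> G h -> G (gmul g h)) /\
  (forall g, G g -> exists g', G g' /\ forall x, g' (g x) = x /\ g (g' x) = x).

Definition PL_subgroup (G : (R -> R) -> Prop) : Prop :=
  is_subgroup G /\ forall g, G g -> PLo g.

(* (c,d) is an orbital of h: a connected component of the (open) support
   {x | h x <> x} of h. *)
Definition orbital (h : R -> R) (c d : R) : Prop :=
  c < d /\ (forall x, c < x < d -> h x <> x) /\ h c = c /\ h d = d.

(* (c,d) is an orbital of the group G: a connected component of the union
   of the supports of elements of G. *)
Definition group_orbital (G : (R -> R) -> Prop) (c d : R) : Prop :=
  c < d /\ (forall x, c < x < d -> exists g, G g /\ g x <> x) /\
  (forall g, G g -> g c = c /\ g d = d).

Definition realizes_left (h : R -> R) (c d : R) : Prop :=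
  exists q, orbital h c q /\ q <= d.
Definition realizes_right (h : R -> R) (c d : R) : Prop :=
  exists p, c <= p /\ orbital h p d.

Definition balanced (H : (R -> R) -> Prop) : Prop :=
  forall G : (R -> R) -> Prop,
    is_subgroup G -> (forall g, G g -> H g) ->
    forall c d, group_orbital G c d ->
      forall g, G g ->
        (realizes_left g c d -> realizes_right g c d) /\
        (realizes_right g c d -> realizes_left g c d).

Definition is_rderiv (h : R -> R) (a l : R) : Prop :=
  filterlim (fun x => (h x - h a) / (x - a)) (at_right a) (locally l).
Definition is_lderiv (h : R -> R) (b l : R) : Prop :=
  filterlim (fun x => (h x - h b) / (x - b)) (at_left b) (locally l).

(* h'_+(a) and h'_-(b) (chosen by classical description; they exist for PL maps). *)
Definition rderiv (h : R -> R) (a : R) : R :=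
  epsilon (inhabits 0) (fun l => is_rderiv h a l).
Definition lderiv (h : R -> R) (b : R) : R :=
  epsilon (inhabits 0) (fun l => is_lderiv h b l).

Definition phi (a b : R) (h : R -> R) : R * R :=
  (ln (rderiv h a), ln (lderiv h b)).

Definition padd (u v : R * R) : R * R := (fst u + fst v, snd u + snd v).

(* Main.v *)
Require Import Defs.
From Stdlib Require Import Reals ZArith Lra Lia ClassicalEpsilon Classical FunctionalExtensionality.
From Coquelicot Require Import Coquelicot.
Open Scope R_scope.

Definition cont (f : R -> R) (x : R) : Prop :=
  forall eps, 0 < eps -> exists del, 0 < del /\
    forall y, Rabs (y - x) < del -> Rabs (f y - f x) < eps.

Lemma locate_r (xs : nat -> R) (n : nat) :
  xs O = 0 -> xs n = 1 -> (forall i, (i < n)%nat -> xs i < xs (S i)) ->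
  forall y, 0 <= y < 1 -> exists j, (j < n)%nat /\ xs j <= y < xs (S j).
Proof.
  intros H0 H1 Hinc y Hy.
  assert (H : forall m, (m <= n)%nat -> y < xs m ->
     exists j, (j < m)%nat /\ xs j <= y < xs (S j)).
  { induction m; intros Hm Hlt.
    - lra.
    - destruct (Rlt_or_le y (xs m)) as [Hl|Hl].
      + destruct (IHm ltac:(lia) Hl) as [j [Hj1 Hj2]]. exists j; split; [lia|lra].
      + exists m; split; [lia|lra]. }
  destruct (H n (le_n n) ltac:(lra)) as [j [? ?]]; eauto.
Qed.

Lemma locate_l (xs : nat -> R) (n : nat) :
  xs O = 0 -> xs n = 1 -> (forall i, (i < n)%nat -> xs i < xs (S i)) ->
  forall y, 0 < y <= 1 -> exists j, (j < n)%nat /\ xs j < y <= xs (S j).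
Proof.
  intros H0 H1 Hinc y Hy.
  assert (H : forall m, (m <= n)%nat -> y <= xs m ->
     exists j, (j < m)%nat /\ xs j < y <= xs (S j)).
  { induction m; intros Hm Hlt.
    - lra.
    - destruct (Rle_or_lt y (xs m)) as [Hl|Hl].
      + destruct (IHm ltac:(lia) Hl) as [j [Hj1 Hj2]]. exists j; split; [lia|lra].
      + exists m; split; [lia|lra]. }
  destruct (H n (le_n n) ltac:(lra)) as [j [? ?]]; eauto.
Qed.

Lemma plo_germs (f : R -> R) : PLo f -> forall p, exists del, 0 < del /\
  exists m1 c1 m2 c2,
   (forall y, p - del <= y <= p -> f y = m1 * y + c1) /\
   (forall y, p <= y <= p + del -> f y = m2 * y + c2).
Proof.
  intros [Hout [H0 [H1 [Hmon [n [xs [X0 [Xn Hp]]]]]]]] p.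
  assert (Hinc : forall i, (i < n)%nat -> xs i < xs (S i)) by (intros i Hi; apply (Hp i Hi)).
  assert (HR : exists d2, 0 < d2 /\ exists m2 c2, forall y, p <= y <= p + d2 -> f y = m2 * y + c2).
  { destruct (Rlt_or_le p 0) as [Hp0|Hp0].
    - exists (- p / 2); split; [lra|]. exists 1, 0; intros y Hy.
      rewrite Hout by lra; ring.
    - destruct (Rlt_or_le p 1) as [Hp1|Hp1].
      + destruct (locate_r xs n X0 Xn Hinc p (conj Hp0 Hp1)) as [j [Hj Hjp]].
        exists (xs (S j) - p); split; [lra|].
        destruct (Hp j Hj) as [_ [m [c Hmc]]]. exists m, c; intros y Hy; apply Hmc; lra.
      + exists 1; split; [lra|]. exists 1, 0; intros y Hy.
        destruct (Req_dec y 1) as [->|Hne]; [rewrite H1; ring|].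
        rewrite Hout by lra; ring. }
  assert (HL : exists d1, 0 < d1 /\ exists m1 c1, forall y, p - d1 <= y <= p -> f y = m1 * y + c1).
  { destruct (Rle_or_lt p 0) as [Hp0|Hp0].
    - exists 1; split; [lra|]. exists 1, 0; intros y Hy.
      destruct (Req_dec y 0) as [->|Hne]; [rewrite H0; ring|].
      rewrite Hout by lra; ring.
    - destruct (Rle_or_lt p 1) as [Hp1|Hp1].
      + destruct (locate_l xs n X0 Xn Hinc p (conj Hp0 Hp1)) as [j [Hj Hjp]].
        exists (p - xs j); split; [lra|].
        destruct (Hp j Hj) as [_ [m [c Hmc]]]. exists m, c; intros y Hy; apply Hmc; lra.
      + exists ((p - 1) / 2); split; [lra|]. exists 1, 0; intros y Hy.
        rewrite Hout by lra; ring. }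
  destruct HR as [d2 [Hd2 [m2 [c2 HR]]]]. destruct HL as [d1 [Hd1 [m1 [c1 HL]]]].
  exists (Rmin d1 d2); split; [apply Rmin_glb_lt; lra|].
  exists m1, c1, m2, c2; split; intros y Hy.
  - apply HL. pose proof (Rmin_l d1 d2). lra.
  - apply HR. pose proof (Rmin_r d1 d2). lra.
Qed.

Lemma plo_cont (f : R -> R) : PLo f -> forall p, cont f p.
Proof.
  intros Hf p eps Heps.
  destruct (plo_germs f Hf p) as [del [Hdel [m1 [c1 [m2 [c2 [HL HR]]]]]]].
  assert (Ep1 : f p = m1 * p + c1) by (apply HL; lra).
  assert (Ep2 : f p = m2 * p + c2) by (apply HR; lra).
  set (K := Rabs m1 + Rabs m2 + 1).
  assert (HK : 0 < K) by (unfold K; pose proof (Rabs_pos m1); pose proof (Rabs_pos m2); lra).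
  exists (Rmin del (eps / K)); split.
  { apply Rmin_glb_lt; [lra|]. apply Rdiv_lt_0_compat; lra. }
  intros y Hy.
  pose proof (Rmin_l del (eps / K)) as Hm1. pose proof (Rmin_r del (eps / K)) as Hm2.
  assert (Hyp : Rabs (y - p) < eps / K) by lra.
  assert (Hyd : Rabs (y - p) < del) by lra.
  assert (HKy : K * Rabs (y - p) < eps).
  { apply Rmult_lt_compat_l with (r := K) in Hyp; [|lra].
    replace (K * (eps / K)) with eps in Hyp by (field; lra). lra. }
  destruct (Rle_or_lt y p) as [Hyp'|Hyp'].
  - rewrite (HL y) by (apply Rabs_def2 in Hyd; lra).
    replace (m1 * y + c1 - f p) with (m1 * (y - p)) by lra.
    rewrite Rabs_mult.
    assert (Rabs m1 * Rabs (y - p) <= K * Rabs (y - p)).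
    { apply Rmult_le_compat_r; [apply Rabs_pos|]. unfold K; pose proof (Rabs_pos m2); lra. }
    lra.
  - rewrite (HR y) by (apply Rabs_def2 in Hyd; lra).
    replace (m2 * y + c2 - f p) with (m2 * (y - p)) by lra.
    rewrite Rabs_mult.
    assert (Rabs m2 * Rabs (y - p) <= K * Rabs (y - p)).
    { apply Rmult_le_compat_r; [apply Rabs_pos|]. unfold K; pose proof (Rabs_pos m1); lra. }
    lra.
Qed.

Lemma plo_mono (f : R -> R) : PLo f -> forall x y, x < y -> f x < f y.
Proof.
  intros Hf. destruct Hf as [Hout [H0 [H1 [Hmon _]]]]. intros x y Hxy.
  assert (A : forall z, 0 <= z <= 1 -> 0 <= f z <= 1).
  { intros z Hz. split.
    - destruct (Req_dec z 0) as [->|Hne]; [lra|]. rewrite <- H0. left; apply Hmon; lra.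
    - destruct (Req_dec z 1) as [->|Hne]; [lra|]. rewrite <- H1. left; apply Hmon; lra. }
  destruct (Rlt_or_le x 0) as [Hx0|Hx0].
  - rewrite (Hout x) by lra.
    destruct (Rlt_or_le y 0) as [Hy0|Hy0]; [rewrite Hout by lra; lra|].
    destruct (Rle_or_lt y 1) as [Hy1|Hy1]; [pose proof (A y (conj Hy0 Hy1)); lra|].
    rewrite (Hout y) by lra; lra.
  - destruct (Rle_or_lt x 1) as [Hx1|Hx1].
    + destruct (Rle_or_lt y 1) as [Hy1|Hy1]; [apply Hmon; lra|].
      rewrite (Hout y) by lra. pose proof (A x (conj Hx0 Hx1)); lra.
    + rewrite (Hout x) by lra. rewrite (Hout y) by lra. lra.
Qed.

Lemma plo_mono_le (f : R -> R) : PLo f -> forall x y, x <= y -> f x <= f y.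
Proof. intros Hf x y [H|H]; [left; apply (plo_mono f Hf); auto| subst; lra]. Qed.

Lemma plo_inj (f : R -> R) : PLo f -> forall x y, f x = f y -> x = y.
Proof.
  intros Hf x y E. destruct (Rtotal_order x y) as [H|[H|H]]; auto;
  apply (plo_mono f Hf) in H; lra.
Qed.

Lemma cont_continuity_pt (f : R -> R) x : cont f x -> continuity_pt f x.
Proof.
  intros Hc. unfold continuity_pt, continue_in, limit1_in, limit_in. simpl.
  intros eps Heps. destruct (Hc eps Heps) as [d [Hd Hd']]. exists d; split; [lra|].
  intros y [_ Hy]. unfold R_dist in *. apply Hd'; auto.
Qed.

Lemma rderiv_unique (h : R -> R) a m : is_rderiv h a m -> rderiv h a = m.
Proof.
  intros Hr. unfold rderiv.
  assert (Hex : exists l, is_rderiv h a l) by (exists m; exact Hr).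
  pose proof (epsilon_spec (inhabits 0) (fun l => is_rderiv h a l) Hex) as Hs.
  set (e := epsilon _ _) in *.
  apply (@filterlim_locally_unique R R_AbsRing R_NormedModule (at_right a)
    (Proper_StrongProper _ (at_right_proper_filter a)) (fun x => (h x - h a) / (x - a)) e m Hs Hr).
Qed.

Lemma lderiv_unique (h : R -> R) a m : is_lderiv h a m -> lderiv h a = m.
Proof.
  intros Hr. unfold lderiv.
  assert (Hex : exists l, is_lderiv h a l) by (exists m; exact Hr).
  pose proof (epsilon_spec (inhabits 0) (fun l => is_lderiv h a l) Hex) as Hs.
  set (e := epsilon _ _) in *.
  apply (@filterlim_locally_unique R R_AbsRing R_NormedModule (at_left a)
    (Proper_StrongProper _ (at_left_proper_filter a)) (fun x => (h x - h a) / (x - a)) e m Hs Hr).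
Qed.

Lemma rderiv_of (h : R -> R) a del m : 0 < del ->
  (forall y, a <= y <= a + del -> h y = a + m * (y - a)) -> rderiv h a = m.
Proof.
  intros Hd Hh. apply rderiv_unique.
  unfold is_rderiv.
  apply filterlim_ext_loc with (f := fun _ => m); [|apply filterlim_const].
  unfold at_right, within, locally. exists (mkposreal del Hd).
  intros y Hy Hay. unfold ball in Hy; simpl in Hy.
  unfold AbsRing_ball, abs, minus, plus, opp in Hy; simpl in Hy.
  apply Rabs_def2 in Hy.
  rewrite (Hh y) by lra. rewrite (Hh a) by lra. field. lra.
Qed.

Lemma lderiv_of (h : R -> R) b del m : 0 < del ->
  (forall y, b - del <= y <= b -> h y = b + m * (y - b)) -> lderiv h b = m.
Proof.
  intros Hd Hh. apply lderiv_unique.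
  unfold is_lderiv.
  apply filterlim_ext_loc with (f := fun _ => m); [|apply filterlim_const].
  unfold at_left, within, locally. exists (mkposreal del Hd).
  intros y Hy Hay. unfold ball in Hy; simpl in Hy.
  unfold AbsRing_ball, abs, minus, plus, opp in Hy; simpl in Hy.
  apply Rabs_def2 in Hy.
  rewrite (Hh y) by lra. rewrite (Hh b) by lra. field. lra.
Qed.

Lemma germ_r (h : R -> R) : PLo h -> forall p d0, 0 < d0 -> exists del, 0 < del /\ del <= d0 /\
  exists m, 0 < m /\ forall y, p <= y <= p + del -> h y = h p + m * (y - p).
Proof.
  intros Hh p d0 Hd0.
  destruct (plo_germs h Hh p) as [del [Hdel [m1 [c1 [m2 [c2 [HL HR]]]]]]].
  exists (Rmin del d0). pose proof (Rmin_l del d0). pose proof (Rmin_r del d0).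
  assert (0 < Rmin del d0) by (apply Rmin_glb_lt; lra).
  split; [lra|split; [lra|]].
  assert (Ep : h p = m2 * p + c2) by (apply HR; lra).
  exists m2. split.
  - assert (E2 : h (p + Rmin del d0) = m2 * (p + Rmin del d0) + c2) by (apply HR; lra).
    pose proof (plo_mono h Hh p (p + Rmin del d0) ltac:(lra)).
    nra.
  - intros y Hy. rewrite (HR y) by lra. rewrite Ep. ring.
Qed.

Lemma germ_l (h : R -> R) : PLo h -> forall p d0, 0 < d0 -> exists del, 0 < del /\ del <= d0 /\
  exists m, 0 < m /\ forall y, p - del <= y <= p -> h y = h p + m * (y - p).
Proof.
  intros Hh p d0 Hd0.
  destruct (plo_germs h Hh p) as [del [Hdel [m1 [c1 [m2 [c2 [HL HR]]]]]]].
  exists (Rmin del d0). pose proof (Rmin_l del d0). pose proof (Rmin_r del d0).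
  assert (0 < Rmin del d0) by (apply Rmin_glb_lt; lra).
  split; [lra|split; [lra|]].
  assert (Ep : h p = m1 * p + c1) by (apply HL; lra).
  exists m1. split.
  - assert (E2 : h (p - Rmin del d0) = m1 * (p - Rmin del d0) + c1) by (apply HL; lra).
    pose proof (plo_mono h Hh (p - Rmin del d0) p ltac:(lra)).
    nra.
  - intros y Hy. rewrite (HL y) by lra. rewrite Ep. ring.
Qed.

Definition closedP (P : R -> Prop) := forall y, ~ P y ->
  exists del, 0 < del /\ forall z, Rabs (z - y) < del -> ~ P z.

Lemma sup_closed (P : R -> Prop) x0 : closedP P -> (exists y, y <= x0 /\ P y) ->
  exists c, c <= x0 /\ P c /\ forall y, c < y <= x0 -> ~ P y.
Proof.
  intros Hc Hne.
  set (E := fun y => y <= x0 /\ P y).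
  assert (Hb : bound E) by (exists x0; intros y [Hy _]; auto).
  destruct (completeness E Hb Hne) as [c [Hub Hlub]].
  assert (Hcx : c <= x0) by (apply Hlub; intros y [Hy _]; auto).
  exists c. split; [auto|split].
  - apply NNPP; intro Hn. destruct (Hc c Hn) as [d [Hd Hd']].
    destruct (classic (exists y, E y /\ c - d / 2 < y)) as [[y [Ey Hy]]|Hno].
    + assert (y <= c) by (apply Hub; auto).
      apply (Hd' y); [apply Rabs_def1; lra| apply Ey].
    + assert (c <= c - d / 2); [|lra].
      apply Hlub. intros y Ey. apply Rnot_lt_le. intro. apply Hno; eauto.
  - intros y Hy Py. assert (y <= c) by (apply Hub; split; [lra|auto]). lra.
Qed.

Lemma inf_closed (P : R -> Prop) x0 : closedP P -> (exists y, x0 <= y /\ P y) ->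
  exists d, x0 <= d /\ P d /\ forall y, x0 <= y < d -> ~ P y.
Proof.
  intros Hc [y0 [Hy0 Py0]].
  destruct (sup_closed (fun z => P (- z)) (- x0)) as [c [Hc1 [Hc2 Hc3]]].
  - intros z Hz. destruct (Hc (- z) Hz) as [d [Hd Hd']]. exists d; split; auto.
    intros w Hw. apply Hd'. replace (- w - - z) with (- (w - z)) by ring. rewrite Rabs_Ropp; auto.
  - exists (- y0). split; [lra|]. rewrite Ropp_involutive; auto.
  - exists (- c). split; [lra|split; auto].
    intros y Hy Py. apply (Hc3 (- y)); [lra|]. rewrite Ropp_involutive; auto.
Qed.

Lemma fam_orbital (F : (R -> R) -> Prop) : (forall k, F k -> PLo k) ->
  forall x0, (exists k, F k /\ k x0 <> x0) ->
  exists c d, c < x0 < d /\ (forall x, c < x < d -> exists k, F k /\ k x <> x) /\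
    (forall k, F k -> k c = c /\ k d = d).
Proof.
  intros HF x0 [k0 [Fk0 Hk0]].
  set (P := fun y => forall k, F k -> k y = y).
  assert (HP : closedP P).
  { intros y Hy. unfold P in Hy. apply not_all_ex_not in Hy as [k Hk].
    apply imply_to_and in Hk as [Fk Hky].
    set (e := Rabs (k y - y)). assert (He : 0 < e) by (apply Rabs_pos_lt; lra).
    destruct (plo_cont k (HF k Fk) y (e / 2) ltac:(lra)) as [d [Hd Hd']].
    exists (Rmin d (e / 2)). split; [apply Rmin_glb_lt; lra|].
    intros z Hz Pz. pose proof (Rmin_l d (e / 2)). pose proof (Rmin_r d (e / 2)).
    specialize (Hd' z ltac:(lra)). specialize (Pz k Fk).
    rewrite Pz in Hd'. unfold e in *.
    apply Rabs_def2 in Hd'. apply Rabs_def2 in Hz.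
    destruct (Rle_or_lt 0 (k y - y)) as [Hs|Hs].
    - rewrite Rabs_right in * by lra. lra.
    - rewrite Rabs_left in * by lra. lra. }
  assert (Hx0 : 0 < x0 < 1).
  { destruct (HF k0 Fk0) as [Hout [H0 [H1 _]]].
    destruct (Rlt_or_le 0 x0); destruct (Rlt_or_le x0 1); try (split; lra).
    - exfalso; apply Hk0. destruct (Req_dec x0 1) as [->|]; [auto|apply Hout; lra].
    - exfalso; apply Hk0. destruct (Req_dec x0 0) as [->|]; [auto|apply Hout; lra]. }
  assert (P0 : P 0) by (intros k Fk; destruct (HF k Fk) as [_ [H0 _]]; auto).
  assert (P1 : P 1) by (intros k Fk; destruct (HF k Fk) as [_ [_ [H1 _]]]; auto).
  assert (nP : ~ P x0) by (intro Hp; apply Hk0; apply Hp; auto).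
  destruct (sup_closed P x0 HP ltac:(exists 0; split; [lra|exact P0])) as [c [Hc1 [Hc2 Hc3]]].
  destruct (inf_closed P x0 HP ltac:(exists 1; split; [lra|exact P1])) as [d [Hd1 [Hd2 Hd3]]].
  assert (c <> x0) by (intro; subst; auto).
  assert (d <> x0) by (intro; subst; auto).
  exists c, d. split; [lra|split].
  - intros x Hx.
    assert (nPx : ~ P x).
    { destruct (Rle_or_lt x x0); [apply Hc3; lra| apply Hd3; lra]. }
    unfold P in nPx. apply not_all_ex_not in nPx as [k Hk].
    apply imply_to_and in Hk as [Fk Hkx]. eauto.
  - intros k Fk; split; [apply Hc2|apply Hd2]; auto.
Qed.

Fixpoint itr (f : R -> R) (n : nat) : R -> R :=
  match n with O => fun x => x | S n => fun x => f (itr f n x) end.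

Lemma iter_add f j n x : itr f (j + n) x = itr f j (itr f n x).
Proof. induction j; simpl; auto. rewrite IHj; auto. Qed.

Lemma pow_le1 k M : 0 <= k <= 1 -> 0 <= k ^ M <= 1.
Proof. intros Hk. induction M; simpl; [lra|]. nra. Qed.

Lemma pow_ge1 k M : 1 <= k -> 1 <= k ^ M.
Proof. intros Hk. induction M; simpl; [lra|]. nra. Qed.

Lemma iter_affine (g : R -> R) (P : R -> Prop) p k :
  0 <= k <= 1 ->
  (forall z, P z -> g z = p + k * (z - p)) ->
  (forall z t, P z -> 0 <= t <= 1 -> P (p + t * (z - p))) ->
  forall M z, P z -> itr g M z = p + k ^ M * (z - p).
Proof.
  intros Hk Hg HP. induction M; intros z Pz; simpl; [ring|].
  rewrite IHM by auto. rewrite Hg; [ring|]. apply HP; auto. apply pow_le1; auto.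
Qed.

Lemma iter_expand (g : R -> R) a l D : 1 <= l ->
  (forall z, a <= z <= a + D -> g z = a + l * (z - a)) ->
  forall M z, a <= z -> l ^ M * (z - a) <= D -> itr g M z = a + l ^ M * (z - a).
Proof.
  intros Hl Hg. induction M; intros z Hz HD; simpl; [ring|].
  simpl in HD.
  pose proof (pow_ge1 l M Hl).
  assert (H1 : 0 <= l ^ M * (z - a)) by (apply Rmult_le_pos; lra).
  assert (H2 : l ^ M * (z - a) <= l * l ^ M * (z - a)).
  { replace (l * l ^ M * (z - a)) with (l * (l ^ M * (z - a))) by ring. nra. }
  rewrite IHM by lra.
  rewrite Hg by lra. ring.
Qed.

Lemma pow_small k e : 0 <= k < 1 -> 0 < e -> exists M, k ^ M < e.
Proof.
  intros Hk He. destruct (pow_lt_1_zero k ltac:(rewrite Rabs_right; lra) e He) as [N HN].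
  exists N. specialize (HN N (le_n N)). rewrite Rabs_right in HN; auto.
  apply Rle_ge, pow_le; lra.
Qed.

Lemma pow_big l K : 1 < l -> exists M, K < l ^ M.
Proof.
  intros Hl. destruct (pow_small (/ l) (/ (Rabs K + 1))) as [M HM].
  - split; [left; apply Rinv_0_lt_compat; lra|]. rewrite <- Rinv_1. apply Rinv_lt_contravar; lra.
  - apply Rinv_0_lt_compat. pose proof (Rabs_pos K); lra.
  - exists M. rewrite pow_inv in HM.
    assert (0 < l ^ M) by (apply pow_lt; lra).
    apply Rinv_lt_cancel in HM; [|pose proof (Rabs_pos K); lra].
    pose proof (Rle_abs K). lra.
Qed.

Definition Ctx (H : (R -> R) -> Prop) (a b : R) : Prop :=
  PL_subgroup H /\ balanced H /\ (forall c d, group_orbital H c d <-> (c = a /\ d = b)).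


Lemma ctx_plo H a b : Ctx H a b -> forall h, H h -> PLo h.
Proof. intros [[_ HP] _] h Hh; auto. Qed.

Lemma ctx_sub H a b : Ctx H a b -> is_subgroup H.
Proof. intros [[HS _] _]; auto. Qed.

Lemma ctx_id H a b : Ctx H a b -> H (fun x => x).
Proof. intros C. destruct (ctx_sub H a b C) as [? _]; auto. Qed.

Lemma ctx_mul H a b : Ctx H a b -> forall g h, H g -> H h -> H (fun x => h (g x)).
Proof. intros C g h Hg Hh. destruct (ctx_sub H a b C) as [_ [HM _]]. apply (HM g h Hg Hh). Qed.

Lemma ctx_inv H a b : Ctx H a b -> forall g, H g ->
  exists g', H g' /\ forall x, g' (g x) = x /\ g (g' x) = x.
Proof. intros C g Hg. destruct (ctx_sub H a b C) as [_ [_ HI]]. apply HI; auto. Qed.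

Lemma ctx_orb H a b : Ctx H a b -> group_orbital H a b.
Proof. intros [_ [_ Hi]]. apply Hi; auto. Qed.

Lemma ctx_ab H a b : Ctx H a b -> a < b /\ 0 <= a /\ b <= 1.
Proof.
  intros C. destruct (ctx_orb H a b C) as [Hab [Hmv Hfix]].
  split; [auto|split].
  - apply Rnot_lt_le; intro Ha.
    set (x := (a + Rmin 0 b) / 2).
    pose proof (Rmin_l 0 b). pose proof (Rmin_r 0 b).
    assert (a < Rmin 0 b) by (apply Rmin_glb_lt; lra).
    destruct (Hmv x ltac:(unfold x; lra)) as [g [Hg Hgx]].
    destruct (ctx_plo H a b C g Hg) as [Hout _]. apply Hgx, Hout. unfold x; lra.
  - apply Rnot_lt_le; intro Hb.
    set (x := (b + Rmax 1 a) / 2).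
    pose proof (Rmax_l 1 a). pose proof (Rmax_r 1 a).
    assert (Rmax 1 a < b) by (apply Rmax_lub_lt; lra).
    destruct (Hmv x ltac:(unfold x; lra)) as [g [Hg Hgx]].
    destruct (ctx_plo H a b C g Hg) as [Hout _]. apply Hgx, Hout. unfold x; lra.
Qed.

Lemma ctx_fix H a b : Ctx H a b -> forall h, H h -> h a = a /\ h b = b.
Proof. intros C h Hh. destruct (ctx_orb H a b C) as [_ [_ Hf]]. auto. Qed.

Lemma outside_fixed H a b : Ctx H a b -> forall g, H g -> forall x, (x <= a \/ b <= x) -> g x = x.
Proof.
  intros C g Hg x Hx. apply NNPP; intro Hgx.
  destruct (fam_orbital H (ctx_plo H a b C) x (ex_intro _ g (conj Hg Hgx))) as [c [d [Hcd [Hm Hf]]]].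
  destruct C as [C1 [C2 C3]].
  assert (Ho : group_orbital H c d) by (split; [lra|split; auto]).
  apply C3 in Ho as [-> ->]. lra.
Qed.

Definition sa (a : R) (h : R -> R) := rderiv h a.
Definition sb (b : R) (h : R -> R) := lderiv h b.

Lemma slope_a H a b : Ctx H a b -> forall h, H h -> forall d0, 0 < d0 ->
  exists del, 0 < del /\ del <= d0 /\ 0 < sa a h /\
    forall y, a <= y <= a + del -> h y = a + sa a h * (y - a).
Proof.
  intros C h Hh d0 Hd0.
  destruct (germ_r h (ctx_plo H a b C h Hh) a d0 Hd0) as [del [Hd [Hdd [m [Hm Hy]]]]].
  rewrite (proj1 (ctx_fix H a b C h Hh)) in Hy.
  assert (E : sa a h = m) by (apply (rderiv_of h a del m Hd Hy)).
  exists del. rewrite E. auto.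
Qed.

Lemma slope_b H a b : Ctx H a b -> forall h, H h -> forall d0, 0 < d0 ->
  exists del, 0 < del /\ del <= d0 /\ 0 < sb b h /\
    forall y, b - del <= y <= b -> h y = b + sb b h * (y - b).
Proof.
  intros C h Hh d0 Hd0.
  destruct (germ_l h (ctx_plo H a b C h Hh) b d0 Hd0) as [del [Hd [Hdd [m [Hm Hy]]]]].
  rewrite (proj2 (ctx_fix H a b C h Hh)) in Hy.
  assert (E : sb b h = m) by (apply (lderiv_of h b del m Hd Hy)).
  exists del. rewrite E. auto.
Qed.

Lemma sa_mul H a b : Ctx H a b -> forall g h, H g -> H h ->
  sa a (fun x => h (g x)) = sa a g * sa a h.
Proof.
  intros C g h Hg Hh.
  destruct (slope_a H a b C g Hg 1 ltac:(lra)) as [dg [Hdg [_ [Hsg Eg]]]].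
  destruct (slope_a H a b C h Hh 1 ltac:(lra)) as [dh [Hdh [_ [Hsh Eh]]]].
  set (d := Rmin dg (dh / sa a g)).
  assert (Hd : 0 < d) by (apply Rmin_glb_lt; [lra|apply Rdiv_lt_0_compat; lra]).
  apply (rderiv_of _ a d). auto.
  intros y Hy. pose proof (Rmin_l dg (dh / sa a g)). pose proof (Rmin_r dg (dh / sa a g)).
  rewrite Eg by (unfold d in *; lra).
  assert (sa a g * (y - a) <= dh).
  { assert (y - a <= dh / sa a g) by (unfold d in *; lra).
    apply Rmult_le_compat_l with (r := sa a g) in H2; [|lra].
    replace (sa a g * (dh / sa a g)) with dh in H2 by (field; lra). lra. }
  rewrite Eh by (split; [nra|lra]). ring.
Qed.

Lemma sb_mul H a b : Ctx H a b -> forall g h, H g -> H h ->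
  sb b (fun x => h (g x)) = sb b g * sb b h.
Proof.
  intros C g h Hg Hh.
  destruct (slope_b H a b C g Hg 1 ltac:(lra)) as [dg [Hdg [_ [Hsg Eg]]]].
  destruct (slope_b H a b C h Hh 1 ltac:(lra)) as [dh [Hdh [_ [Hsh Eh]]]].
  set (d := Rmin dg (dh / sb b g)).
  assert (Hd : 0 < d) by (apply Rmin_glb_lt; [lra|apply Rdiv_lt_0_compat; lra]).
  apply (lderiv_of _ b d). auto.
  intros y Hy. pose proof (Rmin_l dg (dh / sb b g)). pose proof (Rmin_r dg (dh / sb b g)).
  rewrite Eg by (unfold d in *; lra).
  assert (sb b g * (b - y) <= dh).
  { assert (b - y <= dh / sb b g) by (unfold d in *; lra).
    apply Rmult_le_compat_l with (r := sb b g) in H2; [|lra].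
    replace (sb b g * (dh / sb b g)) with dh in H2 by (field; lra). lra. }
  rewrite Eh by (split; [nra|nra]). ring.
Qed.

Lemma sa_id a : sa a (fun x => x) = 1.
Proof. apply (rderiv_of _ a 1 1); [lra|intros; ring]. Qed.
Lemma sb_id b : sb b (fun x => x) = 1.
Proof. apply (lderiv_of _ b 1 1); [lra|intros; ring]. Qed.

Definition Lf a h := ln (sa a h).
Definition Rf b h := ln (sb b h).

Lemma sa_pos H a b : Ctx H a b -> forall h, H h -> 0 < sa a h.
Proof. intros C h Hh. destruct (slope_a H a b C h Hh 1 ltac:(lra)) as [? [? [? [? ?]]]]; auto. Qed.
Lemma sb_pos H a b : Ctx H a b -> forall h, H h -> 0 < sb b h.
Proof. intros C h Hh. destruct (slope_b H a b C h Hh 1 ltac:(lra)) as [? [? [? [? ?]]]]; auto. Qed.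

Lemma L_mul H a b : Ctx H a b -> forall g h, H g -> H h ->
  Lf a (fun x => h (g x)) = Lf a g + Lf a h.
Proof.
  intros C g h Hg Hh. unfold Lf. rewrite (sa_mul H a b C g h Hg Hh).
  apply ln_mult; eapply sa_pos; eauto.
Qed.
Lemma R_mul H a b : Ctx H a b -> forall g h, H g -> H h ->
  Rf b (fun x => h (g x)) = Rf b g + Rf b h.
Proof.
  intros C g h Hg Hh. unfold Rf. rewrite (sb_mul H a b C g h Hg Hh).
  apply ln_mult; eapply sb_pos; eauto.
Qed.

Lemma L_id a : Lf a (fun x => x) = 0.
Proof. unfold Lf. rewrite sa_id. apply ln_1. Qed.
Lemma R_id b : Rf b (fun x => x) = 0.
Proof. unfold Rf. rewrite sb_id. apply ln_1. Qed.

Lemma LR_inv H a b : Ctx H a b -> forall g g', H g -> H g' ->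
  (forall x, g' (g x) = x) -> Lf a g' = - Lf a g /\ Rf b g' = - Rf b g.
Proof.
  intros C g g' Hg Hg' E.
  assert (Ef : (fun x => g' (g x)) = (fun x => x)) by (apply functional_extensionality; auto).
  pose proof (L_mul H a b C g g' Hg Hg') as E1. pose proof (R_mul H a b C g g' Hg Hg') as E2.
  rewrite Ef, L_id in E1. rewrite Ef, R_id in E2. split; lra.
Qed.

Lemma ln_eq0 x : 0 < x -> (ln x = 0 <-> x = 1).
Proof.
  intros Hx. split; intro E.
  - apply ln_inv; auto; [lra|]. rewrite ln_1; auto.
  - subst; apply ln_1.
Qed.

Lemma realizes_left_of H a b : Ctx H a b -> forall h, H h -> sa a h <> 1 -> realizes_left h a b.
Proof.
  intros C h Hh Hs. destruct (ctx_ab H a b C) as [Hab [Ha Hb]].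
  destruct (ctx_fix H a b C h Hh) as [Fa Fb].
  destruct (slope_a H a b C h Hh ((b - a) / 2) ltac:(lra)) as [del [Hd [Hdd [Hpos E]]]].
  set (x0 := a + del).
  assert (Hmv : forall y, a < y <= x0 -> h y <> y).
  { intros y Hy. rewrite E by (unfold x0 in *; lra). intro E2.
    apply Hs. assert ((sa a h - 1) * (y - a) = 0) by lra.
    apply Rmult_integral in H0 as [?|?]; lra. }
  destruct (fam_orbital (fun k => k = h) ltac:(intros k ->; eapply ctx_plo; eauto) x0
     ltac:(exists h; split; [auto|apply Hmv; unfold x0; lra])) as [c [d [Hcd [Hm Hf]]]].
  destruct (Hf h eq_refl) as [Fc Fd].
  assert (c = a).
  { destruct (Rtotal_order c a) as [Hl|[Hl|Hl]]; auto.
    - destruct (Hm a ltac:(unfold x0 in *; lra)) as [k [-> Hk]]; congruence.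
    - exfalso; apply (Hmv c); auto; lra. }
  subst c. exists d. split.
  - split; [lra|split; [|auto]]. intros x Hx. destruct (Hm x Hx) as [k [-> Hk]]; auto.
  - apply Rnot_lt_le; intro Hdb.
    destruct (Hm b ltac:(unfold x0 in *; lra)) as [k [-> Hk]]; congruence.
Qed.

Lemma realizes_right_of H a b : Ctx H a b -> forall h, H h -> sb b h <> 1 -> realizes_right h a b.
Proof.
  intros C h Hh Hs. destruct (ctx_ab H a b C) as [Hab [Ha Hb]].
  destruct (ctx_fix H a b C h Hh) as [Fa Fb].
  destruct (slope_b H a b C h Hh ((b - a) / 2) ltac:(lra)) as [del [Hd [Hdd [Hpos E]]]].
  set (x0 := b - del).
  assert (Hmv : forall y, x0 <= y < b -> h y <> y).
  { intros y Hy. rewrite E by (unfold x0 in *; lra). intro E2.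
    apply Hs. assert ((sb b h - 1) * (y - b) = 0) by lra.
    apply Rmult_integral in H0 as [?|?]; lra. }
  destruct (fam_orbital (fun k => k = h) ltac:(intros k ->; eapply ctx_plo; eauto) x0
     ltac:(exists h; split; [auto|apply Hmv; unfold x0; lra])) as [c [d [Hcd [Hm Hf]]]].
  destruct (Hf h eq_refl) as [Fc Fd].
  assert (d = b).
  { destruct (Rtotal_order d b) as [Hl|[Hl|Hl]]; auto.
    - exfalso; apply (Hmv d); auto; lra.
    - destruct (Hm b ltac:(unfold x0 in *; lra)) as [k [-> Hk]]; congruence. }
  subst d. exists c. split.
  - apply Rnot_lt_le; intro Hca.
    destruct (Hm a ltac:(unfold x0 in *; lra)) as [k [-> Hk]]; congruence.
  - split; [lra|split; [|auto]]. intros x Hx. destruct (Hm x Hx) as [k [-> Hk]]; auto.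
Qed.

Lemma realizes_left_slope H a b : Ctx H a b -> forall h, H h -> realizes_left h a b -> sa a h <> 1.
Proof.
  intros C h Hh [q [[Haq [Hm [Fa Fq]]] Hqb]] Hs.
  destruct (slope_a H a b C h Hh ((q - a) / 2) ltac:(lra)) as [del [Hd [Hdd [Hpos E]]]].
  apply (Hm (a + del)); [lra|]. rewrite E by lra. rewrite Hs. ring.
Qed.

Lemma realizes_right_slope H a b : Ctx H a b -> forall h, H h -> realizes_right h a b -> sb b h <> 1.
Proof.
  intros C h Hh [p [Hap [Hpb [Hm [Fp Fb]]]]] Hs.
  destruct (slope_b H a b C h Hh ((b - p) / 2) ltac:(lra)) as [del [Hd [Hdd [Hpos E]]]].
  apply (Hm (b - del)); [lra|]. rewrite E by lra. rewrite Hs. ring.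
Qed.

Lemma claim1 H a b : Ctx H a b -> forall h, H h -> (Lf a h = 0 <-> Rf b h = 0).
Proof.
  intros C h Hh. unfold Lf, Rf.
  rewrite (ln_eq0 _ (sa_pos H a b C h Hh)), (ln_eq0 _ (sb_pos H a b C h Hh)).
  destruct C as [C1 [C2 C3]] eqn:EC.
  assert (Hbal := C2 H (ctx_sub H a b C) (fun g Hg => Hg) a b (ctx_orb H a b C) h Hh).
  split; intro E; apply NNPP; intro Hn.
  - apply (realizes_right_of H a b C h Hh) in Hn.
    apply (proj2 Hbal) in Hn. apply (realizes_left_slope H a b C h Hh) in Hn. auto.
  - apply (realizes_left_of H a b C h Hh) in Hn.
    apply (proj1 Hbal) in Hn. apply (realizes_right_slope H a b C h Hh) in Hn. auto.
Qed.

Lemma itr_H H a b : Ctx H a b -> forall g, H g -> forall n, H (itr g n).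
Proof.
  intros C g Hg n. induction n; simpl.
  - apply (ctx_id H a b C).
  - apply (ctx_mul H a b C (itr g n) g IHn Hg).
Qed.

Lemma itr_comm (f g : R -> R) : (forall x, f (g x) = g (f x)) ->
  forall n x, g (itr f n x) = itr f n (g x).
Proof. intros Hc n. induction n; intros x; simpl; auto. rewrite <- Hc, IHn; auto. Qed.

Lemma ln_pos_gt1 x : 0 < x -> 0 < ln x -> 1 < x.
Proof.
  intros Hx Hl. destruct (Rlt_or_le 1 x) as [?|Hle]; auto.
  destruct Hle as [Hlt| ->].
  - pose proof (ln_increasing x 1 Hx Hlt). rewrite ln_1 in H. lra.
  - rewrite ln_1 in Hl; lra.
Qed.

Lemma orbit_inf H a b : Ctx H a b -> forall v, a < v < b -> forall eta, 0 < eta ->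
  exists t, H t /\ t v < a + eta.
Proof.
  intros C v Hv eta Heta. apply NNPP; intro Hn.
  assert (Hge : forall t, H t -> a + eta <= t v).
  { intros t Ht. apply Rnot_lt_le; intro Hl. apply Hn; eauto. }
  set (E := fun y => exists t, H t /\ y = - t v).
  assert (HbE : bound E) by (exists (- (a + eta)); intros y [t [Ht ->]]; specialize (Hge t Ht); lra).
  assert (HnE : exists y, E y) by (exists (- v); exists (fun x => x); split; [apply (ctx_id H a b C)|auto]).
  destruct (completeness E HbE HnE) as [M [Hub Hlub]].
  set (m := - M).
  assert (Hm1 : forall t, H t -> m <= t v).
  { intros t Ht. assert (- t v <= M) by (apply Hub; exists t; auto). unfold m; lra. }
  assert (Hm2 : forall e, 0 < e -> exists t, H t /\ t v < m + e).
  { intros e He. apply NNPP; intro Hn2. assert (M <= M - e); [|lra].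
    apply Hlub. intros y [t [Ht ->]]. apply Rnot_lt_le; intro Hl. apply Hn2.
    exists t; split; auto. unfold m; lra. }
  assert (Hma : a + eta <= m).
  { assert (M <= - (a + eta)); [|unfold m; lra].
    apply Hlub. intros y [t [Ht ->]]. specialize (Hge t Ht). lra. }
  assert (Hmv : m <= v) by (apply (Hm1 (fun x => x)); apply (ctx_id H a b C)).
  assert (Hge2 : forall s, H s -> m <= s m).
  { intros s Hs. apply Rnot_lt_le; intro Hl.
    destruct (plo_cont s (ctx_plo H a b C s Hs) m (m - s m) ltac:(lra)) as [d [Hd Hd']].
    destruct (Hm2 d Hd) as [t [Ht Htv]].
    pose proof (Hm1 t Ht).
    specialize (Hd' (t v) ltac:(apply Rabs_def1; lra)). apply Rabs_def2 in Hd'.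
    pose proof (Hm1 (fun x => s (t x)) (ctx_mul H a b C t s Ht Hs)). simpl in H1. lra. }
  assert (Hfix : forall s, H s -> s m = m).
  { intros s Hs. pose proof (Hge2 s Hs).
    destruct (ctx_inv H a b C s Hs) as [s' [Hs' Es]].
    pose proof (Hge2 s' Hs').
    pose proof (plo_mono_le s (ctx_plo H a b C s Hs) m (s' m) H1).
    rewrite (proj2 (Es m)) in H2. lra. }
  destruct (ctx_orb H a b C) as [_ [Hmv2 _]].
  destruct (Hmv2 m ltac:(lra)) as [g [Hg Hgm]]. apply Hgm, Hfix; auto.
Qed.

Lemma orbital_unique k x1 w1 x2 w2 beta : orbital k x1 w1 -> orbital k x2 w2 ->
  x1 < beta < w1 -> x2 < beta < w2 -> x1 = x2 /\ w1 = w2.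
Proof.
  intros [_ [M1 [F1 G1]]] [_ [M2 [F2 G2]]] B1 B2.
  split.
  - destruct (Rtotal_order x1 x2) as [Hl|[Hl|Hl]]; auto.
    + exfalso; apply (M1 x2); [lra|auto].
    + exfalso; apply (M2 x1); [lra|auto].
  - destruct (Rtotal_order w1 w2) as [Hl|[Hl|Hl]]; auto.
    + exfalso; apply (M2 w1); [lra|auto].
    + exfalso; apply (M1 w2); [lra|auto].
Qed.

Lemma ratio_bound k : PLo k -> forall a, exists r, 1 < r /\
  forall x w, a < x -> orbital k x w -> r <= (w - a) / (x - a).
Proof.
  intros Hk a. pose proof Hk as Hk'.
  destruct Hk' as [Hout [H0 [H1 [Hmon [n [xs [X0 [Xn Hp]]]]]]]].
  assert (Hinc : forall i, (i < n)%nat -> xs i < xs (S i)) by (intros i Hi; apply (Hp i Hi)).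
  (* every orbital contains a breakpoint *)
  assert (Hbk : forall x w, orbital k x w -> exists j, (j <= n)%nat /\ x < xs j < w).
  { intros x w Ho. destruct Ho as [Hxw [Hm [Fx Fw]]].
    assert (Hx0 : 0 <= x).
    { apply Rnot_lt_le; intro Hl. apply (Hm ((x + Rmin 0 w) / 2)).
      - pose proof (Rmin_l 0 w); pose proof (Rmin_r 0 w).
        assert (x < Rmin 0 w) by (apply Rmin_glb_lt; lra). lra.
      - apply Hout. left. pose proof (Rmin_l 0 w); pose proof (Rmin_r 0 w).
        assert (x < Rmin 0 w) by (apply Rmin_glb_lt; lra). lra. }
    assert (Hx1 : x < 1).
    { apply Rnot_le_lt; intro Hl. apply (Hm ((x + w) / 2)); [lra|].
      apply Hout. right; lra. }
    destruct (locate_r xs n X0 Xn Hinc x (conj Hx0 Hx1)) as [j [Hj Hjx]].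
    exists (S j). split; [lia|]. split; [lra|].
    apply Rnot_le_lt; intro Hw.
    destruct (Hp j Hj) as [_ [m [c Hmc]]].
    assert (E1 : x = m * x + c) by (rewrite <- Fx at 1; apply Hmc; lra).
    assert (E2 : w = m * w + c) by (rewrite <- Fw at 1; apply Hmc; lra).
    assert (Hm1 : m = 1).
    { assert ((m - 1) * (w - x) = 0) by lra. apply Rmult_integral in H as [?|?]; lra. }
    apply (Hm ((x + w) / 2)); [lra|]. rewrite Hmc by lra. subst m. lra. }
  assert (Hind : forall N, exists r, 1 < r /\ forall j, (j < N)%nat ->
     forall x w, a < x -> orbital k x w -> x < xs j < w -> r <= (w - a) / (x - a)).
  { induction N.
    - exists 2. split; [lra|]. intros j Hj; lia.
    - destruct IHN as [r [Hr Hr']].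
      destruct (classic (exists x w, a < x /\ orbital k x w /\ x < xs N < w)) as
        [[x0 [w0 [Hax0 [Ho0 Hb0]]]]|Hno].
      + assert (Hrat : 1 < (w0 - a) / (x0 - a)).
        { apply (Rmult_lt_reg_r (x0 - a)); [lra|]. unfold Rdiv.
          rewrite Rmult_assoc, Rinv_l by lra. lra. }
        exists (Rmin r ((w0 - a) / (x0 - a))). split; [apply Rmin_glb_lt; lra|].
        intros j Hj x w Hax Ho Hb.
        destruct (Nat.lt_ge_cases j N) as [Hjn|Hjn].
        * pose proof (Rmin_l r ((w0 - a) / (x0 - a))). specialize (Hr' j Hjn x w Hax Ho Hb). lra.
        * assert (j = N) by lia. subst j.
          destruct (orbital_unique k x w x0 w0 (xs N) Ho Ho0 Hb Hb0) as [-> ->].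
          apply Rmin_r.
      + exists r. split; auto. intros j Hj x w Hax Ho Hb.
        destruct (Nat.lt_ge_cases j N) as [Hjn|Hjn]; [apply (Hr' j Hjn); auto|].
        assert (j = N) by lia. subst j. exfalso; apply Hno; eauto. }
  destruct (Hind (S n)) as [r [Hr Hr']].
  exists r. split; auto. intros x w Hax Ho.
  destruct (Hbk x w Ho) as [j [Hjn Hj]].
  apply (Hr' j ltac:(lia)); auto.
Qed.

Lemma small_elt H a b : Ctx H a b ->
  (forall eps, 0 < eps -> exists h, H h /\ 0 < Lf a h < eps) ->
  forall r, 1 < r -> exists h, H h /\ 1 < sa a h < r.
Proof.
  intros C Hs r Hr.
  assert (0 < ln r) by (rewrite <- ln_1; apply ln_increasing; lra).
  destruct (Hs (ln r) H0) as [h [Hh [H1 H2]]].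
  exists h. split; auto. pose proof (sa_pos H a b C h Hh). unfold Lf in *.
  split; [apply ln_pos_gt1; auto|apply ln_lt_inv; lra].
Qed.

Lemma caseB H a b : Ctx H a b ->
  (forall eps, 0 < eps -> exists h, H h /\ 0 < Lf a h < eps) ->
  (forall k, H k -> Lf a k = 0 -> forall z, k z = z) -> False.
Proof.
  intros C Hs Htriv.
  destruct (ctx_ab H a b C) as [Hab [Ha Hb]].
  assert (Hcomm : forall f g, H f -> H g -> forall x, f (g x) = g (f x)).
  { intros f g Hf Hg x.
    destruct (ctx_inv H a b C f Hf) as [fi [Hfi Ef]].
    destruct (ctx_inv H a b C g Hg) as [gi [Hgi Eg]].
    destruct (LR_inv H a b C f fi Hf Hfi ltac:(intro y; apply Ef)) as [Lfi _].
    destruct (LR_inv H a b C g gi Hg Hgi ltac:(intro y; apply Eg)) as [Lgi _].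
    set (A1 := fun y => g (f y)).
    set (A2 := fun y => fi (A1 y)).
    set (A3 := fun y => gi (A2 y)).
    assert (HA1 : H A1) by exact (ctx_mul H a b C f g Hf Hg).
    assert (HA2 : H A2) by exact (ctx_mul H a b C A1 fi HA1 Hfi).
    assert (HA3 : H A3) by exact (ctx_mul H a b C A2 gi HA2 Hgi).
    assert (L3 : Lf a A3 = 0).
    { unfold A3. rewrite (L_mul H a b C A2 gi HA2 Hgi).
      unfold A2. rewrite (L_mul H a b C A1 fi HA1 Hfi).
      unfold A1. rewrite (L_mul H a b C f g Hf Hg). lra. }
    pose proof (Htriv A3 HA3 L3 x) as E. unfold A3, A2, A1 in E.
    assert (E2 : fi (g (f x)) = g x).
    { rewrite <- (proj2 (Eg (fi (g (f x))))). rewrite E. reflexivity. }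
    rewrite <- E2. apply Ef. }
  destruct (small_elt H a b C Hs 2 ltac:(lra)) as [f [Hf [Hl1 _]]].
  set (l := sa a f) in *.
  destruct (slope_a H a b C f Hf ((b - a) / 2) ltac:(lra)) as [D [HD [HDb [_ Ef]]]].
  fold l in Ef.
  assert (Hfplo := ctx_plo H a b C f Hf).
  destruct (ctx_fix H a b C f Hf) as [Fa Fb].
  assert (Hnofix : forall y, a < y < b -> f y <> y).
  { set (x0 := a + D).
    assert (Hx0 : f x0 <> x0) by (unfold x0; rewrite Ef by lra; nra).
    destruct (fam_orbital (fun k => k = f) ltac:(intros k ->; auto) x0
       ltac:(exists f; split; auto)) as [c [d [Hcd [Hm Hff]]]].
    destruct (Hff f eq_refl) as [Fc Fd].
    assert (c = a).
    { destruct (Rtotal_order c a) as [Hl|[Hl|Hl]]; auto.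
      - destruct (Hm a ltac:(unfold x0 in *; lra)) as [k [-> Hk]]; congruence.
      - exfalso. rewrite Ef in Fc by (unfold x0 in *; lra). nra. }
    subst c.
    assert (Hdb : d <= b).
    { apply Rnot_lt_le; intro Hdb.
      destruct (Hm b ltac:(unfold x0 in *; lra)) as [k [-> Hk]]; congruence. }
    assert (Hdb2 : d = b).
    { destruct Hdb as [Hdb|]; auto. exfalso.
      assert (Hall : forall s, H s -> s d = d).
      { intros s Hsm.
        assert (Hsplo := ctx_plo H a b C s Hsm).
        destruct (ctx_fix H a b C s Hsm) as [Sa _].
        assert (Hsd : a < s d) by (rewrite <- Sa at 1; apply (plo_mono s Hsplo); lra).
        destruct (Rtotal_order (s d) d) as [Hl|[Hl|Hl]]; auto.
        - exfalso. destruct (Hm (s d) ltac:(lra)) as [k [-> Hk]].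
          apply Hk. rewrite Hcomm by auto. rewrite Fd. auto.
        - exfalso. destruct (ctx_inv H a b C s Hsm) as [si [Hsi Es]].
          assert (Hsiplo := ctx_plo H a b C si Hsi).
          destruct (ctx_fix H a b C si Hsi) as [Sia _].
          assert (Hsid : si d < d).
          { rewrite <- (proj1 (Es d)) at 2. apply (plo_mono si Hsiplo); lra. }
          assert (a < si d) by (rewrite <- Sia at 1; apply (plo_mono si Hsiplo); lra).
          destruct (Hm (si d) ltac:(lra)) as [k [-> Hk]].
          apply Hk. rewrite Hcomm by auto. rewrite Fd. auto. }
      destruct (ctx_orb H a b C) as [_ [Hmv _]].
      destruct (Hmv d ltac:(unfold x0 in *; lra)) as [g [Hg Hgd]]. apply Hgd, Hall; auto. }
    subst d. intros y Hy. destruct (Hm y Hy) as [k [-> Hk]]; auto. }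
  assert (Hright : forall y, a < y < b -> y < f y).
  { intros y Hy. apply Rnot_le_lt; intro Hle.
    destruct Hle as [Hlt| E].
    2:{ apply (Hnofix y Hy); auto. }
    set (x0 := a + D).
    assert (Hx0 : x0 < f x0) by (unfold x0; rewrite Ef by lra; nra).
    destruct (Rle_or_lt y x0) as [Hyx|Hyx].
    - rewrite Ef in Hlt by (unfold x0 in *; lra). nra.
    - assert (Hc : continuity (fun z => z - f z)).
      { change (continuity (id - f)%F). apply continuity_minus.
        - apply derivable_continuous, derivable_id.
        - intro z. apply cont_continuity_pt, plo_cont; auto. }
      destruct (IVT (fun z => z - f z) x0 y Hc Hyx ltac:(lra) ltac:(lra)) as [z [Hz Ez]].
      apply (Hnofix z ltac:(unfold x0 in *; lra)). lra. }
  assert (Hinab : forall y, a < y < b -> a < f y < b).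
  { intros y Hy. pose proof (Hright y Hy). split; [lra|].
    rewrite <- Fb. apply (plo_mono f Hfplo); lra. }
  destruct (slope_b H a b C f Hf ((b - a) / 2) ltac:(lra)) as [E [HE [HEb [Hlbpos Efb]]]].
  set (lb := sb b f) in *.
  assert (Hlb1 : lb < 1).
  { pose proof (Hright (b - E) ltac:(lra)). rewrite Efb in H0 by lra. nra. }
  set (ys := a + D / 4).
  assert (Hits : forall n, a < itr f n ys < b).
  { induction n; simpl; [unfold ys; lra|]. apply Hinab; auto. }
  assert (HN0 : exists N0, b - E <= itr f N0 ys).
  { apply NNPP; intro Hn.
    assert (Hlt : forall n, itr f n ys < b - E).
    { intro n. apply Rnot_le_lt; intro Hl. apply Hn; eauto. }
    set (Sq := fun y => exists n, y = itr f n ys).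
    assert (HbS : bound Sq) by (exists (b - E); intros y [n ->]; left; auto).
    destruct (completeness Sq HbS (ex_intro _ ys (ex_intro _ O eq_refl))) as [L [Hub Hlub]].
    assert (HL1 : L <= b - E) by (apply Hlub; intros y [n ->]; left; auto).
    assert (HL0 : ys <= L) by (apply Hub; exists O; auto).
    assert (HfL : L < f L) by (apply Hright; unfold ys in *; lra).
    destruct (plo_cont f Hfplo L (f L - L) ltac:(lra)) as [d [Hd Hd']].
    assert (Hex : exists n, L - d < itr f n ys).
    { apply NNPP; intro Hn2. assert (L <= L - d); [|lra].
      apply Hlub. intros y [n ->]. apply Rnot_lt_le; intro. apply Hn2; eauto. }
    destruct Hex as [n Hn3].
    assert (itr f n ys <= L) by (apply Hub; exists n; auto).
    assert (itr f (S n) ys <= L) by (apply Hub; exists (S n); auto).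
    specialize (Hd' (itr f n ys) ltac:(apply Rabs_def1; lra)). apply Rabs_def2 in Hd'.
    simpl in H1. lra. }
  destruct HN0 as [N0 HN0].
  set (Phi := itr f N0).
  assert (HPhi : H Phi) by (apply (itr_H H a b C); auto).
  assert (HPplo := ctx_plo H a b C Phi HPhi).
  destruct (germ_r Phi HPplo ys (D / 4) ltac:(lra)) as [dl [Hdl [Hdl2 [mP [HmP EP]]]]].
  set (rho := (ys - a + dl) / (ys - a + dl / 2)).
  assert (Hrho : 1 < rho).
  { unfold rho. apply (Rmult_lt_reg_r (ys - a + dl / 2)); [unfold ys; lra|].
    unfold Rdiv. rewrite Rmult_assoc, Rinv_l by (unfold ys; lra). lra. }
  destruct (small_elt H a b C Hs (Rmin rho 2) ltac:(apply Rmin_glb_lt; lra)) as [g [Hg [Hmu1 Hmu2]]].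
  set (mu := sa a g) in *.
  pose proof (Rmin_l rho 2). pose proof (Rmin_r rho 2).
  assert (Hgplo := ctx_plo H a b C g Hg).
  destruct (slope_a H a b C g Hg 1 ltac:(lra)) as [dg [Hdg [_ [_ Eg]]]]. fold mu in Eg.
  assert (Eg2 : forall y, a <= y <= a + D / 2 -> g y = a + mu * (y - a)).
  { intros y Hy.
    destruct (pow_big l (D / dg) Hl1) as [M HM].
    assert (HlM : 0 < l ^ M) by (apply pow_lt; lra).
    set (x := a + (y - a) / l ^ M).
    assert (Ex : itr f M x = y).
    { unfold x. rewrite (iter_expand f a l D ltac:(lra) Ef M).
      - field. lra.
      - assert (0 <= (y - a) / l ^ M) by (apply Rdiv_le_0_compat; lra). lra.
      - replace (l ^ M * (a + (y - a) / l ^ M - a)) with (y - a) by (field; lra). lra. }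
    assert (Hxa : 0 <= x - a <= dg).
    { unfold x. split.
      - assert (0 <= (y - a) / l ^ M) by (apply Rdiv_le_0_compat; lra). lra.
      - replace (a + (y - a) / l ^ M - a) with ((y - a) / l ^ M) by ring.
        apply Rmult_lt_compat_r with (r := dg) in HM; [|lra].
        replace (D / dg * dg) with D in HM by (field; lra).
        apply Rle_trans with (D / l ^ M).
        + unfold Rdiv. apply Rmult_le_compat_r; [left; apply Rinv_0_lt_compat; lra|lra].
        + apply (Rmult_le_reg_r (l ^ M)); [lra|]. unfold Rdiv.
          rewrite Rmult_assoc, Rinv_l by lra. lra. }
    assert (Ey : g y = itr f M (g x)).
    { rewrite <- Ex at 1. apply itr_comm. exact (Hcomm f g Hf Hg). }
    rewrite Ey. rewrite Eg by lra.
    rewrite (iter_expand f a l D ltac:(lra) Ef M).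
    - unfold x. field. lra.
    - nra.
    - replace (l ^ M * (a + mu * (x - a) - a)) with (mu * (l ^ M * (x - a))) by ring.
      replace (l ^ M * (x - a)) with (y - a) by (unfold x; field; lra). nra. }
  destruct (slope_b H a b C g Hg 1 ltac:(lra)) as [dgb [Hdgb [_ [Hnu Egb]]]].
  set (nu := sb b g) in *.
  destruct (pow_small lb (dgb / E) ltac:(lra) ltac:(apply Rdiv_lt_0_compat; lra)) as [j Hj].
  assert (Hlbj : 0 < lb ^ j) by (apply pow_lt; lra).
  assert (HjE : lb ^ j * E < dgb).
  { apply Rmult_lt_compat_r with (r := E) in Hj; [|lra].
    replace (dgb / E * E) with dgb in Hj by (field; lra). lra. }
  assert (HPb : forall y, ys <= y <= ys + dl -> b - E <= Phi y < b).
  { intros y Hy. split.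
    - apply Rle_trans with (Phi ys); [exact HN0|]. apply (plo_mono_le Phi HPplo); lra.
    - destruct (ctx_fix H a b C Phi HPhi) as [_ PFb]. rewrite <- PFb.
      apply (plo_mono Phi HPplo). unfold ys in *; lra. }
  assert (Hcontr : forall z, b - E <= z <= b -> itr f j z = b + lb ^ j * (z - b)).
  { intros z Hz. apply (iter_affine f (fun w => b - E <= w <= b) b lb).
    - split; lra.
    - intros w Hw. rewrite Efb by lra. ring.
    - intros w t Hw Ht. simpl in *. nra.
    - exact Hz. }
  assert (Key : forall y, ys <= y <= ys + dl -> ys <= a + mu * (y - a) <= ys + dl ->
     Phi (a + mu * (y - a)) - b = nu * (Phi y - b)).
  { intros y Hy Hgy.
    pose proof (itr_comm f g (Hcomm f g Hf Hg) (j + N0) y) as Ecm.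
    rewrite !iter_add in Ecm. fold Phi in Ecm.
    rewrite (Eg2 y) in Ecm by (unfold ys in *; lra).
    rewrite (Hcontr (Phi (a + mu * (y - a)))) in Ecm by (pose proof (HPb _ Hgy); lra).
    rewrite (Hcontr (Phi y)) in Ecm by (pose proof (HPb _ Hy); lra).
    rewrite Egb in Ecm.
    2:{ pose proof (HPb _ Hy). split; [|nra].
        assert (lb ^ j * (b - Phi y) <= lb ^ j * E) by (apply Rmult_le_compat_l; lra). lra. }
    assert (Ecm2 : lb ^ j * (Phi (a + mu * (y - a)) - b) = lb ^ j * (nu * (Phi y - b))) by lra.
    apply Rmult_eq_reg_l in Ecm2; lra. }
  set (y2 := ys + dl / 2).
  assert (Hg1 : ys <= a + mu * (ys - a) <= ys + dl).
  { split; [unfold ys; nra|].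
    assert (mu * (ys - a + dl / 2) <= ys - a + dl).
    { assert (mu <= rho) by lra. unfold rho in H2.
      apply Rmult_le_compat_r with (r := ys - a + dl / 2) in H2; [|unfold ys; lra].
      unfold Rdiv in H2. rewrite Rmult_assoc, Rinv_l in H2 by (unfold ys; lra). lra. }
    nra. }
  assert (Hg2 : ys <= a + mu * (y2 - a) <= ys + dl).
  { unfold y2. split; [unfold ys; nra|].
    assert (mu <= rho) by lra. unfold rho in H2.
    apply Rmult_le_compat_r with (r := ys - a + dl / 2) in H2; [|unfold ys; lra].
    unfold Rdiv in H2. rewrite Rmult_assoc, Rinv_l in H2 by (unfold ys; lra). lra. }
  pose proof (Key ys ltac:(lra) Hg1) as K1.
  pose proof (Key y2 ltac:(unfold y2; lra) Hg2) as K2.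
  rewrite (EP (a + mu * (ys - a))) in K1 by lra.
  rewrite (EP (a + mu * (y2 - a))) in K2 by lra.
  rewrite (EP y2) in K2 by (unfold y2; lra).
  replace (Phi ys + mP * (ys - ys)) with (Phi ys) in K1 by ring.
  assert (HA : Phi ys - b < 0) by (pose proof (HPb ys ltac:(lra)); lra).
  assert (Hmunu : mu = nu).
  { unfold y2 in K2.
    assert (mP * mu * (dl / 2) = nu * mP * (dl / 2)) by lra.
    apply (Rmult_eq_reg_r (mP * (dl / 2))); [lra|]. apply Rmult_integral_contrapositive; lra. }
  rewrite <- Hmunu in K1.
  assert (Hz : (mu - 1) * (mP * (ys - a) - (Phi ys - b)) = 0) by lra.
  apply Rmult_integral in Hz as [?|?]; [lra|].
  assert (0 < mP * (ys - a)) by (apply Rmult_lt_0_compat; unfold ys; lra). lra.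
Qed.

Lemma moved_nbhd f x : cont f x -> f x <> x ->
  exists del, 0 < del /\ forall y, Rabs (y - x) < del -> f y <> y.
Proof.
  intros Hc Hx.
  set (e := Rabs (f x - x)). assert (He : 0 < e) by (apply Rabs_pos_lt; lra).
  destruct (Hc (e / 2) ltac:(lra)) as [d [Hd Hd']].
  exists (Rmin d (e / 2)). split; [apply Rmin_glb_lt; lra|].
  intros z Hz Pz. pose proof (Rmin_l d (e / 2)). pose proof (Rmin_r d (e / 2)).
  specialize (Hd' z ltac:(lra)).
  rewrite Pz in Hd'. unfold e in *.
  apply Rabs_def2 in Hd'. apply Rabs_def2 in Hz.
  destruct (Rle_or_lt 0 (f x - x)) as [Hs|Hs].
  - rewrite Rabs_right in * by lra. lra.
  - rewrite Rabs_left in * by lra. lra.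
Qed.

Lemma caseA H a b : Ctx H a b ->
  (forall eps, 0 < eps -> exists h, H h /\ 0 < Lf a h < eps) ->
  (exists k, H k /\ Lf a k = 0 /\ exists z, k z <> z) -> False.
Proof.
  intros C Hs [k [Hk [Lk [z Hz]]]].
  destruct (ctx_ab H a b C) as [Hab [Ha Hb]].
  assert (Hkplo := ctx_plo H a b C k Hk).
  assert (Sk : sa a k = 1) by (apply (ln_eq0 _ (sa_pos H a b C k Hk)); auto).
  assert (Sk2 : sb b k = 1).
  { apply (ln_eq0 _ (sb_pos H a b C k Hk)). apply (claim1 H a b C k Hk); auto. }
  destruct (slope_a H a b C k Hk ((b - a) / 3) ltac:(lra)) as [d1 [Hd1 [Hd1b [_ Ek1]]]].
  destruct (slope_b H a b C k Hk ((b - a) / 3) ltac:(lra)) as [d2 [Hd2 [Hd2b [_ Ek2]]]].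
  rewrite Sk in Ek1. rewrite Sk2 in Ek2.
  assert (Hsupp : forall y, k y <> y -> a + d1 < y < b - d2).
  { intros y Hy. split; apply Rnot_le_lt; intro Hl; apply Hy.
    - destruct (Rle_or_lt y a); [apply (outside_fixed H a b C k Hk); lra|].
      rewrite Ek1 by lra. ring.
    - destruct (Rle_or_lt b y); [apply (outside_fixed H a b C k Hk); lra|].
      rewrite Ek2 by lra. ring. }
  destruct (small_elt H a b C Hs 2 ltac:(lra)) as [f [Hf [Hl1 _]]].
  set (l := sa a f) in *.
  destruct (slope_a H a b C f Hf ((b - a) / 2) ltac:(lra)) as [D [HD [HDb [_ Ef]]]].
  fold l in Ef.
  destruct (ctx_inv H a b C f Hf) as [fi [Hfi Efi]].
  assert (Efi2 : forall y, a <= y <= a + D -> fi y = a + / l * (y - a)).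
  { intros y Hy.
    assert (E1 : f (a + / l * (y - a)) = y).
    { rewrite Ef.
      - field. lra.
      - split.
        + assert (0 <= / l * (y - a)) by (apply Rmult_le_pos; [left; apply Rinv_0_lt_compat|]; lra). lra.
        + assert (/ l * (y - a) <= y - a).
          { rewrite <- (Rmult_1_l (y - a)) at 2. apply Rmult_le_compat_r; [lra|].
            rewrite <- Rinv_1. apply Rinv_le_contravar; lra. }
          lra. }
    rewrite <- E1 at 1. apply Efi. }
  (* conjugate k near a *)
  destruct (orbit_inf H a b C (b - d2) ltac:(lra) (D / 4) ltac:(lra)) as [t [Ht Htv]].
  assert (Htplo := ctx_plo H a b C t Ht).
  destruct (ctx_fix H a b C t Ht) as [Ta _].
  destruct (ctx_inv H a b C t Ht) as [ti [Hti Eti]].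
  set (k' := fun x => t (k (ti x))).
  assert (Hk' : H k').
  { unfold k'. apply (ctx_mul H a b C (fun x => k (ti x)) t); auto.
    apply (ctx_mul H a b C ti k); auto. }
  assert (Hk'plo := ctx_plo H a b C k' Hk').
  set (lo := t (a + d1)).
  assert (Hlo : a < lo) by (unfold lo; rewrite <- Ta at 1; apply (plo_mono t Htplo); lra).
  assert (Hsupp' : forall y, k' y <> y -> lo < y < a + D / 4).
  { intros y Hy.
    assert (Hky : k (ti y) <> ti y).
    { intro E. apply Hy. unfold k'. rewrite E. apply Eti. }
    apply Hsupp in Hky. rewrite <- (proj2 (Eti y)). split.
    - apply (plo_mono t Htplo); lra.
    - apply Rlt_trans with (t (b - d2)); [apply (plo_mono t Htplo); lra|lra]. }
  assert (Hk'nt : k' (t z) <> t z).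
  { unfold k'. rewrite (proj1 (Eti z)). intro E. apply Hz. apply (plo_inj t Htplo); auto. }
  destruct (ratio_bound k' Hk'plo a) as [r [Hr Hrat]].
  destruct (small_elt H a b C Hs (Rmin r 2) ltac:(apply Rmin_glb_lt; lra)) as [h [Hh [Hmu1 Hmu2]]].
  set (mu := sa a h) in *.
  pose proof (Rmin_l r 2). pose proof (Rmin_r r 2).
  destruct (slope_a H a b C h Hh 1 ltac:(lra)) as [dh [Hdh [_ [_ Eh]]]]. fold mu in Eh.
  destruct (pow_small (/ l) (dh / D)) as [M HM].
  { split; [left; apply Rinv_0_lt_compat; lra|]. rewrite <- Rinv_1. apply Rinv_lt_contravar; lra. }
  { apply Rdiv_lt_0_compat; lra. }
  assert (HilM : 0 < (/ l) ^ M) by (apply pow_lt, Rinv_0_lt_compat; lra).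
  assert (HlM : 0 < l ^ M) by (apply pow_lt; lra).
  assert (Hinv : l ^ M * (/ l) ^ M = 1) by (rewrite pow_inv; field; lra).
  set (h' := fun x => itr f M (h (itr fi M x))).
  assert (Hh' : H h').
  { unfold h'. apply (ctx_mul H a b C (fun x => h (itr fi M x)) (itr f M)).
    - apply (ctx_mul H a b C (itr fi M) h); auto. apply (itr_H H a b C); auto.
    - apply (itr_H H a b C); auto. }
  assert (Hh'plo := ctx_plo H a b C h' Hh').
  assert (Eh' : forall y, a <= y <= a + D / 2 -> h' y = a + mu * (y - a)).
  { intros y Hy. unfold h'.
    rewrite (iter_affine fi (fun w => a <= w <= a + D) a (/ l)).
    - rewrite Eh.
      + rewrite (iter_expand f a l D ltac:(lra) Ef M).
        * replace (l ^ M * (a + mu * (a + (/ l) ^ M * (y - a) - a) - a))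
            with (mu * (l ^ M * (/ l) ^ M) * (y - a)) by ring.
          rewrite Hinv. ring.
        * assert (0 <= (/ l) ^ M * (y - a)) by (apply Rmult_le_pos; lra). nra.
        * replace (l ^ M * (a + mu * (a + (/ l) ^ M * (y - a) - a) - a))
            with (mu * (l ^ M * (/ l) ^ M) * (y - a)) by ring.
          rewrite Hinv. nra.
      + split.
        * assert (0 <= (/ l) ^ M * (y - a)) by (apply Rmult_le_pos; lra). lra.
        * apply Rmult_lt_compat_r with (r := D) in HM; [|lra].
          replace (dh / D * D) with dh in HM by (field; lra).
          assert ((/ l) ^ M * (y - a) <= (/ l) ^ M * D) by (apply Rmult_le_compat_l; lra).
          lra.
    - split; [left; apply Rinv_0_lt_compat; lra|]. rewrite <- Rinv_1. apply Rinv_le_contravar; lra.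
    - intros w Hw. apply Efi2; auto.
    - intros w s Hw Hs0. simpl in *. nra.
    - simpl. lra. }
  destruct (ctx_inv H a b C h' Hh') as [hi [Hhi Ehi]].
  assert (Ehi2 : forall w, a <= w <= a + D / 2 -> hi w = a + (w - a) / mu).
  { intros w Hw.
    assert (E1 : h' (a + (w - a) / mu) = w).
    { rewrite Eh'; [field; lra|]. split.
      - assert (0 <= (w - a) / mu) by (apply Rdiv_le_0_compat; lra). lra.
      - assert ((w - a) / mu <= w - a).
        { apply (Rmult_le_reg_r mu); [lra|]. unfold Rdiv. rewrite Rmult_assoc, Rinv_l by lra. nra. }
        lra. }
    rewrite <- E1 at 1. apply Ehi. }
  set (c2 := fun x => h' (k' (hi x))).
  assert (Hc2 : H c2).
  { unfold c2. apply (ctx_mul H a b C (fun x => k' (hi x)) h'); auto.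
    apply (ctx_mul H a b C hi k'); auto. }
  set (G := fun g => H g /\ forall y, k' y = y -> c2 y = y -> g y = y).
  assert (HG : is_subgroup G).
  { split; [|split].
    - split; [apply (ctx_id H a b C)|auto].
    - intros g1 g2 [HH1 F1] [HH2 F2]. split.
      + apply (ctx_mul H a b C g1 g2); auto.
      + intros y Ey1 Ey2. unfold gmul. rewrite F1, F2; auto.
    - intros g [Hg Fg]. destruct (ctx_inv H a b C g Hg) as [gi [Hgi Egi]].
      exists gi. split; [split; auto|auto].
      intros y Ey1 Ey2. rewrite <- (Fg y Ey1 Ey2) at 1. apply Egi. }
  assert (HGH : forall g, G g -> H g) by (intros g [? ?]; auto).
  assert (HGk' : G k') by (split; auto).
  assert (HGc2 : G c2) by (split; auto).
  (* leftmost point of the support of k' *)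
  set (Es := fun y => exists x, k' x <> x /\ y = - x).
  assert (HbEs : bound Es).
  { exists (- lo). intros y [x [Hx ->]]. apply Hsupp' in Hx. lra. }
  destruct (completeness Es HbEs (ex_intro _ (- t z) (ex_intro _ (t z) (conj Hk'nt eq_refl))))
    as [Mu [HMub HMlub]].
  set (u := - Mu).
  assert (Hu1 : forall x, k' x <> x -> u <= x).
  { intros x Hx. assert (- x <= Mu) by (apply HMub; exists x; auto). unfold u; lra. }
  assert (Hu2 : forall e, 0 < e -> exists x, k' x <> x /\ x < u + e).
  { intros e He. apply NNPP; intro Hn. assert (Mu <= Mu - e); [|lra].
    apply HMlub. intros y [x [Hx ->]]. apply Rnot_lt_le; intro Hl. apply Hn.
    exists x; split; auto. unfold u; lra. }
  assert (Hulo : lo <= u).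
  { assert (Mu <= - lo); [|unfold u; lra]. apply HMlub. intros y [x [Hx ->]].
    apply Hsupp' in Hx. lra. }
  assert (HuD : u < a + D / 4).
  { destruct (Hu2 1 ltac:(lra)) as [x [Hx _]]. pose proof (Hu1 x Hx). apply Hsupp' in Hx. lra. }
  assert (Hku : k' u = u).
  { apply NNPP; intro Hn.
    destruct (moved_nbhd k' u (plo_cont k' Hk'plo u) Hn) as [d [Hd Hd']].
    assert (Hky : k' (u - d / 2) <> u - d / 2) by (apply Hd'; apply Rabs_def1; lra).
    pose proof (Hu1 _ Hky). lra. }
  destruct (germ_r k' Hk'plo u (D / 8) ltac:(lra)) as [du [Hdu [Hdu2 [mk [Hmk Ek']]]]].
  rewrite Hku in Ek'.
  assert (Hmk1 : mk <> 1).
  { intro E. subst mk. destruct (Hu2 du Hdu) as [x [Hx Hxu]].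
    pose proof (Hu1 x Hx). apply Hx. rewrite Ek' by lra. ring. }
  assert (Hmv : forall y, u < y <= u + du -> k' y <> y).
  { intros y Hy. rewrite Ek' by lra. intro E.
    assert ((mk - 1) * (y - u) = 0) by lra. apply Rmult_integral in H2 as [?|?]; lra. }
  set (x0 := u + du).
  assert (Hc2u : c2 u = u).
  { unfold c2. rewrite Ehi2 by lra.
    assert (Hlt : a + (u - a) / mu < u).
    { assert ((u - a) / mu < u - a); [|lra].
      apply (Rmult_lt_reg_r mu); [lra|]. unfold Rdiv. rewrite Rmult_assoc, Rinv_l by lra. nra. }
    assert (Hfx : k' (a + (u - a) / mu) = a + (u - a) / mu).
    { apply NNPP; intro Hn. pose proof (Hu1 _ Hn). lra. }
    rewrite Hfx. rewrite <- (Ehi2 u) by lra. apply Ehi. }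
  assert (HGu : forall g, G g -> g u = u) by (intros g [_ Fg]; apply Fg; auto).
  destruct (fam_orbital G (fun g Hg => ctx_plo H a b C g (HGH g Hg)) x0
     (ex_intro _ k' (conj HGk' (Hmv x0 ltac:(unfold x0; lra))))) as [c [d [Hcd [HmG HfG]]]].
  assert (Hc : c = u).
  { destruct (Rtotal_order c u) as [Hl|[Hl|Hl]]; auto.
    - exfalso. destruct (HmG u ltac:(unfold x0 in *; lra)) as [g [Hg Hgu]]. apply Hgu, HGu; auto.
    - exfalso. apply (Hmv c); [unfold x0 in *; lra|]. apply (HfG k' HGk'). }
  subst c.
  assert (HoG : group_orbital G u d) by (split; [lra|split; auto]).
  destruct (fam_orbital (fun g => g = k') (fun g Hg => eq_ind_r PLo Hk'plo Hg) x0
     (ex_intro _ k' (conj eq_refl (Hmv x0 ltac:(unfold x0; lra))))) as [c1 [e1 [Hcd1 [Hm1 Hf1]]]].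
  destruct (Hf1 k' eq_refl) as [Fc1 Fe1].
  assert (Hc1 : c1 = u).
  { destruct (Rtotal_order c1 u) as [Hl|[Hl|Hl]]; auto.
    - exfalso. destruct (Hm1 u ltac:(unfold x0 in *; lra)) as [g [-> Hgu]]. auto.
    - exfalso. apply (Hmv c1); [unfold x0 in *; lra|auto]. }
  subst c1.
  assert (He1 : e1 <= d).
  { apply Rnot_lt_le; intro Hl.
    destruct (Hm1 d ltac:(lra)) as [g [-> Hgd]]. apply Hgd. apply (HfG k' HGk'). }
  assert (Hrl : realizes_left k' u d).
  { exists e1. split; [|auto]. split; [lra|split; [|auto]].
    intros x Hx. destruct (Hm1 x Hx) as [g [-> Hg]]; auto. }
  destruct C as [C1 [Hbal C3]] eqn:EC.
  destruct (Hbal G HG HGH u d HoG k' HGk') as [Hbl _].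
  destruct (Hbl Hrl) as [p [Hup [Hpd [Hmp [Fp Fd]]]]].
  assert (Hdd : d <= a + D / 4).
  { apply Rnot_lt_le; intro Hl.
    set (y := (Rmax p (a + D / 4) + d) / 2).
    pose proof (Rmax_l p (a + D / 4)). pose proof (Rmax_r p (a + D / 4)).
    assert (Rmax p (a + D / 4) < d) by (apply Rmax_lub_lt; lra).
    assert (Hky : k' y <> y) by (apply Hmp; unfold y; lra).
    apply Hsupp' in Hky. unfold y in Hky. lra. }
  assert (Hpa : a < p) by lra.
  specialize (Hrat p d Hpa (conj Hpd (conj Hmp (conj Fp Fd)))).
  set (zz := a + (d - a) / mu).
  assert (Hzz1 : zz < d).
  { unfold zz. assert ((d - a) / mu < d - a); [|lra].
    apply (Rmult_lt_reg_r mu); [lra|]. unfold Rdiv. rewrite Rmult_assoc, Rinv_l by lra. nra. }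
  assert (Hzz2 : p < zz).
  { unfold zz.
    assert (mu < (d - a) / (p - a)) by lra.
    apply Rmult_lt_compat_r with (r := p - a) in H2; [|lra].
    unfold Rdiv in H2. rewrite Rmult_assoc, Rinv_l in H2 by lra.
    assert (p - a < (d - a) / mu); [|lra].
    apply (Rmult_lt_reg_r mu); [lra|]. unfold Rdiv. rewrite Rmult_assoc, Rinv_l by lra. lra. }
  assert (Hkz : k' zz <> zz) by (apply Hmp; lra).
  assert (Hc2d : c2 d = d) by (apply (HfG c2 HGc2)).
  unfold c2 in Hc2d. rewrite Ehi2 in Hc2d by lra. fold zz in Hc2d.
  assert (Hhz : h' zz = d).
  { assert (Hz1 : a + (d - a) / mu < d) by exact Hzz1.
    assert (0 <= (d - a) / mu) by (apply Rdiv_le_0_compat; lra).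
    unfold zz. rewrite Eh'; [field; lra|]. lra. }
  apply Hkz. apply (plo_inj h' Hh'plo). rewrite Hc2d, Hhz. auto.
Qed.

Lemma no_small H a b : Ctx H a b ->
  ~ (forall eps, 0 < eps -> exists h, H h /\ 0 < Lf a h < eps).
Proof.
  intros C Hs.
  destruct (classic (exists k, H k /\ Lf a k = 0 /\ exists z, k z <> z)) as [Hex|Hno].
  - apply (caseA H a b C Hs Hex).
  - apply (caseB H a b C Hs). intros k Hk Lk z. apply NNPP; intro Hn. apply Hno; eauto.
Qed.

Lemma iter_H H a b : Ctx H a b -> forall g, H g -> forall n, H (itr g n).
Proof.
  intros C g Hg n. induction n; simpl.
  - apply (ctx_id H a b C).
  - apply (ctx_mul H a b C (itr g n) g IHn Hg).
Qed.

Lemma iter_LR H a b : Ctx H a b -> forall g, H g -> forall n,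
  Lf a (itr g n) = INR n * Lf a g /\ Rf b (itr g n) = INR n * Rf b g.
Proof.
  intros C g Hg n. induction n.
  - simpl. rewrite L_id, R_id. split; ring.
  - change (itr g (S n)) with (fun x => g (itr g n x)).
    rewrite (L_mul H a b C (itr g n) g (iter_H H a b C g Hg n) Hg).
    rewrite (R_mul H a b C (itr g n) g (iter_H H a b C g Hg n) Hg).
    destruct IHn as [E1 E2]. rewrite E1, E2, S_INR. split; ring.
Qed.

Theorem lemma9 (H : (R -> R) -> Prop) (a b : R) :
  PL_subgroup H -> balanced H ->
  (forall c d, group_orbital H c d <-> (c = a /\ d = b)) ->
  (forall g h, H g -> H h -> phi a b (gmul g h) = padd (phi a b g) (phi a b h)) /\
  ((forall h, H h -> phi a b h = (0, 0)) \/
   exists psi : Z -> R * R,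
     (forall m n, psi (m + n)%Z = padd (psi m) (psi n)) /\
     (forall m n, psi m = psi n -> m = n) /\
     (forall v, (exists h, H h /\ phi a b h = v) <-> exists k, psi k = v)).
Proof.
  intros HPL Hbal Hiff.
  assert (C : Ctx H a b) by (split; [|split]; auto).
  assert (Ephi : forall h, phi a b h = (Lf a h, Rf b h)) by reflexivity.
  split.
  { intros g h Hg Hh. rewrite !Ephi. unfold gmul.
    rewrite (L_mul H a b C g h Hg Hh), (R_mul H a b C g h Hg Hh). reflexivity. }
  destruct (classic (forall h, H h -> Lf a h = 0)) as [Hall|Hex].
  { left. intros h Hh. rewrite Ephi. rewrite (Hall h Hh).
    rewrite (proj1 (claim1 H a b C h Hh) (Hall h Hh)). reflexivity. }
  right.
  apply not_all_ex_not in Hex as [h1 Hh1]. apply imply_to_and in Hh1 as [Hh1 Lh1].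
  assert (Hpos : exists h, H h /\ 0 < Lf a h).
  { destruct (Rlt_or_le 0 (Lf a h1)) as [?|?]; [eauto|].
    destruct (ctx_inv H a b C h1 Hh1) as [h1' [Hh1' E]].
    exists h1'. split; auto.
    destruct (LR_inv H a b C h1 h1' Hh1 Hh1' ltac:(intro x; apply E)) as [E1 _].
    assert (Lf a h1 <> 0) by auto. lra. }
  destruct (classic (exists eps, 0 < eps /\ forall h, H h -> 0 < Lf a h -> eps <= Lf a h))
    as [[eps [Heps Hmin]]|Hsmall].
  2:{ exfalso. apply (no_small H a b C). intros e He.
      apply NNPP; intro Hn. apply Hsmall. exists e; split; auto.
      intros h Hh Hp. apply Rnot_lt_le; intro Hl. apply Hn. exists h; auto. }
  set (P := fun g => exists h, H h /\ Lf a h = g /\ 0 < g).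
  set (E := fun x => P (- x)).
  assert (HbE : bound E).
  { exists (- eps). intros x [h [Hh [Ex Hx]]]. pose proof (Hmin h Hh ltac:(lra)). lra. }
  assert (HneE : exists x, E x).
  { destruct Hpos as [h [Hh Hp]]. exists (- Lf a h). exists h. rewrite Ropp_involutive. auto. }
  destruct (completeness E HbE HneE) as [M [HMub HMlub]].
  set (m := - M).
  assert (Hm1 : forall g, P g -> m <= g).
  { intros g Pg. assert (- g <= M) by (apply HMub; unfold E; rewrite Ropp_involutive; auto).
    unfold m; lra. }
  assert (Hm2 : forall eta, m < eta -> exists g, P g /\ g < eta).
  { intros eta Heta. apply NNPP; intro Hn.
    assert (M <= - eta); [|unfold m in *; lra].
    apply HMlub. intros x Ex. apply Rnot_lt_le; intro Hx. apply Hn. exists (- x).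
    split; auto. lra. }
  assert (Hmpos : eps <= m).
  { destruct HneE as [x Ex].
    assert (Hl : M <= - eps).
    { apply HMlub. intros y [h [Hh [Ey Hy]]]. pose proof (Hmin h Hh ltac:(lra)). lra. }
    unfold m; lra. }
  assert (Hdiff : forall g1 g2, P g1 -> P g2 -> g2 < g1 -> P (g1 - g2)).
  { intros g1 g2 [k1 [Hk1 [E1 _]]] [k2 [Hk2 [E2 _]]] Hlt.
    destruct (ctx_inv H a b C k2 Hk2) as [k2' [Hk2' Ek]].
    destruct (LR_inv H a b C k2 k2' Hk2 Hk2' ltac:(intro x; apply Ek)) as [F1 _].
    exists (fun x => k2' (k1 x)). split; [apply (ctx_mul H a b C); auto|].
    rewrite (L_mul H a b C k1 k2' Hk1 Hk2'). split; lra. }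
  assert (Hatt : P m).
  { apply NNPP; intro Hn.
    destruct (Hm2 (2 * m) ltac:(lra)) as [g1 [Pg1 Hg1]].
    assert (m < g1) by (destruct (Rle_lt_or_eq_dec _ _ (Hm1 g1 Pg1)) as [?|E']; [auto|subst; tauto]).
    destruct (Hm2 g1 ltac:(lra)) as [g2 [Pg2 Hg2]].
    assert (m < g2) by (destruct (Rle_lt_or_eq_dec _ _ (Hm1 g2 Pg2)) as [?|E']; [auto|subst; tauto]).
    pose proof (Hm1 _ (Hdiff g1 g2 Pg1 Pg2 Hg2)). lra. }
  destruct Hatt as [h0 [Hh0 [Eh0 _]]].
  destruct (ctx_inv H a b C h0 Hh0) as [h0i [Hh0i Ei]].
  destruct (LR_inv H a b C h0 h0i Hh0 Hh0i ltac:(intro x; apply Ei)) as [Fi1 Fi2].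
  set (zel := fun k : Z => match k with
                | Z0 => (fun x : R => x)
                | Zpos p => itr h0 (Pos.to_nat p)
                | Zneg p => itr h0i (Pos.to_nat p) end).
  assert (Hzel : forall k, H (zel k) /\ Lf a (zel k) = IZR k * m /\ Rf b (zel k) = IZR k * Rf b h0).
  { intros [|p|p]; simpl.
    - split; [apply (ctx_id H a b C)|]. rewrite L_id, R_id. split; ring.
    - destruct (iter_LR H a b C h0 Hh0 (Pos.to_nat p)) as [E1 E2].
      rewrite INR_IPR in E1, E2.
      split; [apply (iter_H H a b C); auto|]. rewrite E1, E2, Eh0. auto.
    - destruct (iter_LR H a b C h0i Hh0i (Pos.to_nat p)) as [E1 E2].
      rewrite INR_IPR in E1, E2.
      split; [apply (iter_H H a b C); auto|]. rewrite E1, E2, Fi1, Fi2, Eh0. change (IZR (Zneg p)) with (- IPR p). split; ring. }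
  exists (fun k => (IZR k * m, IZR k * Rf b h0)).
  split; [|split].
  - intros k1 k2. unfold padd; simpl. rewrite plus_IZR. f_equal; ring.
  - intros k1 k2 Ek. injection Ek as E1 E2. apply eq_IZR.
    apply Rmult_eq_reg_r with m; auto; lra.
  - intros v; split.
    + intros [h [Hh <-]]. rewrite Ephi.
      set (k := (up (Lf a h / m) - 1)%Z).
      destruct (archimed (Lf a h / m)) as [A1 A2].
      assert (Hk1 : IZR k <= Lf a h / m) by (unfold k; rewrite minus_IZR; simpl; lra).
      assert (Hk2 : Lf a h / m < IZR k + 1) by (unfold k; rewrite minus_IZR; simpl; lra).
      assert (Hk3 : IZR k * m <= Lf a h).
      { apply Rmult_le_compat_r with (r := m) in Hk1; [|lra].
        replace (Lf a h / m * m) with (Lf a h) in Hk1 by (field; lra). lra. }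
      assert (Hk4 : Lf a h < IZR k * m + m).
      { apply Rmult_lt_compat_r with (r := m) in Hk2; [|lra].
        replace (Lf a h / m * m) with (Lf a h) in Hk2 by (field; lra). lra. }
      destruct (Hzel (- k)%Z) as [Hz [Lz Rz]].
      set (e := fun x => zel (- k)%Z (h x)).
      assert (He : H e) by (exact (ctx_mul H a b C h (zel (- k)%Z) Hh Hz)).
      assert (Le : Lf a e = Lf a h - IZR k * m).
      { unfold e. rewrite (L_mul H a b C h _ Hh Hz), Lz, opp_IZR. ring. }
      assert (Le0 : Lf a e = 0).
      { destruct (Rle_lt_or_eq_dec 0 (Lf a e) ltac:(lra)) as [Hp|Hp]; [|auto].
        exfalso. pose proof (Hm1 (Lf a e) (ex_intro _ e (conj He (conj eq_refl Hp)))). lra. }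
      apply (claim1 H a b C e He) in Le0 as Re0.
      unfold e in Re0. rewrite (R_mul H a b C h _ Hh Hz), Rz, opp_IZR in Re0.
      exists k. f_equal; lra.
    + intros [k <-]. destruct (Hzel k) as [Hz [Lz Rz]]. exists (zel k). split; auto.
      rewrite Ephi, Lz, Rz. reflexivity.
Qed.
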